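(* Let $q$ be an odd prime power. For $1\leq i\leq k$, let $b_i\in\mathbb{F}_q$ and let $l_i,s_i$ be positive integers with $l_i$ odd; let $\delta\in\mathbb{F}_{q^2}$. Let $\varepsilon$ be a primitive element of $\mathbb{F}_{q^2}$ and $t=(q+1)/2$. Then the polynomial $$P(x)=-x+\sum_{i=1}^k b_i\varepsilon^{tl_i}\left((x^q+x+\delta)^{s_i}+(x^q+x+\delta)^{qs_i}\right)$$ permutes $\mathbb{F}_{q^2}$, and its compositional inverse over $\mathbb{F}_{q^2}$ is $$P^{-1}(x)=-x+\sum_{i=1}^k b_i\varepsilon^{tl_i}\left((-x^q-x+\delta)^{s_i}+(-x^q-x+\delta)^{qs_i}\right).$$
   Context: The compositional inverse of a permutation polynomial $f$ of $\mathbb{F}_{Q}$ is the unique polynomial $f^{-1}$ (modulo $x^Q-x$) with $f(f^{-1}(c))=f^{-1}(f(c))=c$ for all $c\in\mathbb{F}_Q$. *)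

(* Defs.v *)
From HB Require Import structures.
From mathcomp Require Import all_boot all_order all_algebra all_field.
Set Implicit Arguments. Unset Strict Implicit. Unset Printing Implicit Defensive.
Import GRing.Theory.
Local Open Scope ring_scope.

Definition P38 (F : finFieldType) (q k t : nat) (b : 'I_k -> F) (l s : 'I_k -> nat)
  (eps delta : F) (x : F) : F :=
  - x + \sum_(i < k) b i * eps ^+ (t * l i) *
        ((x ^+ q + x + delta) ^+ s i + (x ^+ q + x + delta) ^+ (q * s i)).

Definition P38inv (F : finFieldType) (q k t : nat) (b : 'I_k -> F) (l s : 'I_k -> nat)
  (eps delta : F) (x : F) : F :=
  - x + \sum_(i < k) b i * eps ^+ (t * l i) *
        ((- x ^+ q - x + delta) ^+ s i + (- x ^+ q - x + delta) ^+ (q * s i)).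

(* Main.v *)
Require Import Defs.
From HB Require Import structures.
From mathcomp Require Import all_boot all_order all_algebra all_field.
From mathcomp Require Import zify.
Import GRing.Theory.
Local Open Scope ring_scope.

Theorem theorem3p8 (F : finFieldType) (q : nat)
  (hq_pp : exists p e : nat, [/\ prime p, (0 < e)%N & q = p ^ e]%N)
  (hq_odd : odd q) (hF : #|F| = (q ^ 2)%N)
  (k : nat) (b : 'I_k -> F) (l s : 'I_k -> nat)
  (hb : forall i, b i ^+ q = b i)
  (hl : forall i, (0 < l i)%N && odd (l i))
  (hs : forall i, (0 < s i)%N)
  (delta eps : F) (heps : (q ^ 2 - 1)%N.-primitive_root eps) :
  let t := (q.+1 %/ 2)%N in
  bijective (P38 q t b l s eps delta) /\
  cancel (P38 q t b l s eps delta) (P38inv q t b l s eps delta) /\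
  cancel (P38inv q t b l s eps delta) (P38 q t b l s eps delta).
Proof.
move=> t.
have [p [e [pp e0 qe]]] := hq_pp.
have pc : p \in [pchar F].
  apply: (@card_finPcharP _ p (e * 2)%N) => //; by rewrite hF qe expnM.
have qnat : [pchar F].-nat q.
  rewrite qe pnatX pnatE //; by rewrite pc.
have frD (a c : F) : (a + c) ^+ q = a ^+ q + c ^+ q by exact: (exprDn_pchar _ _ qnat).
have frN (a : F) : (- a) ^+ q = - a ^+ q by exact: (exprNn_pchar _ qnat).
have frK (a : F) : (a ^+ q) ^+ q = a by rewrite -exprM mulnn -hF expf_card.
have frS (I : finType) (f : I -> F) : (\sum_i f i) ^+ q = \sum_i (f i) ^+ q.
  apply: (big_morph (fun a => a ^+ q)) => //.
  by rewrite expr0n; move: hq_odd; case: (q).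
have q1 : (1 < q)%N by rewrite qe -[1%N](expn0 p) ltn_exp2l ?prime_gt1.
have q3 : (2 < q)%N by move: q1 hq_odd; case: (q) => [|[|[]]].
have qr : q = (q./2).*2.+1 by rewrite -[LHS]odd_double_half hq_odd.
set r := q./2 in qr.
have r0 : (0 < r)%N by move: q3; rewrite qr; case: (r).
have hq2 : (q ^ 2 - 1 = (r.+1 * r.*2) * 2)%N by rewrite qr; nia.
pose m := ((q ^ 2 - 1) %/ 2)%N.
have hm : (m = r.+1 * r.*2)%N by rewrite /m hq2 mulnK.
have tm : (t * (q - 1))%N = m.
  rewrite /t hm qr.
  have -> : ((r.*2.+2) = r.+1 * 2)%N by nia.
  by rewrite mulnK // subn1.
have em : eps ^+ m = -1.
  have : (eps ^+ m) ^+ 2 == 1.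
    by rewrite -exprM -(prim_order_dvd heps) hq2 hm.
  rewrite sqrf_eq1 => /orP[|/eqP //].
  rewrite -(prim_order_dvd heps) => /dvdn_leq.
  rewrite hq2 hm; nia.
have ew i : (b i * eps ^+ (t * l i)) ^+ q = - (b i * eps ^+ (t * l i)).
  rewrite exprMn hb.
  have -> : (q = 1 + (q - 1))%N by rewrite subnKC // ltnW.
  rewrite exprD expr1 -(exprM _ (t * l i)) mulnAC tm (exprM _ m) em.
  case/andP: (hl i) => _ lodd; rewrite -signr_odd lodd.
  by rewrite expr1 mulrN1 mulrN.
pose S u := \sum_(i < k) b i * eps ^+ (t * l i) * (u ^+ s i + u ^+ (q * s i)).
have SE u : (S u) ^+ q = - S u.
  rewrite /S frS -sumrN; apply: eq_bigr => i _.
  rewrite exprMn ew mulNr; congr (- (_ * _)).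
  rewrite frD addrC; congr (_ + _); last by rewrite -exprM mulnC.
  by rewrite -exprM mulnC mulnA !exprM frK.
have PE x : P38 q t b l s eps delta x = - x + S (x ^+ q + x + delta) by [].
have PiE x : P38inv q t b l s eps delta x = - x + S (- x ^+ q - x + delta) by [].
have TrP x : (P38 q t b l s eps delta x) ^+ q + P38 q t b l s eps delta x = - (x ^+ q + x).
  rewrite PE frD SE frN; set z := S _.
  by rewrite addrACA addNr addr0 opprD.
have TrPi x : (P38inv q t b l s eps delta x) ^+ q + P38inv q t b l s eps delta x = - (x ^+ q + x).
  rewrite PiE frD SE frN; set z := S _.
  by rewrite addrACA addNr addr0 opprD.
have c1 : cancel (P38 q t b l s eps delta) (P38inv q t b l s eps delta).
  move=> x; rewrite PiE.
  have -> : - (P38 q t b l s eps delta x) ^+ q - P38 q t b l s eps delta x = x ^+ q + x.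
    by rewrite -opprD TrP opprK.
  by rewrite PE opprD opprK subrK.
have c2 : cancel (P38inv q t b l s eps delta) (P38 q t b l s eps delta).
  move=> x; rewrite PE TrPi.
  have -> : - (x ^+ q + x) + delta = - x ^+ q - x + delta by rewrite opprD.
  by rewrite PiE opprD opprK subrK.
split; first by exists (P38inv q t b l s eps delta).
by split.
Qed.
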